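(* Under the standing assumptions, let $g,h\in\mathcal G$ with $J_g=J_h\neq\{0\}$. Then $g=h$. Consequently, for every subgroupoid $H$ of $\mathcal G$, the map $\sigma:h\mapsto J_h$ restricted to $\mathcal S_H=\{h\in H: J_h\neq\{0\}\}$ is injective.
   Context: All rings and algebras are associative and unital. A groupoid is a nonempty set $\mathcal G$ with a partially defined associative multiplication in which every $g$ has an inverse $g^{-1}$, a left identity $r(g)=gg^{-1}$ and a right identity $d(g)=g^{-1}g$; $gh$ is defined iff $d(g)=r(h)$; $\mathcal G_0$ is the set of identities. Standing assumptions: $K$ commutative ring, $R$ a $K$-algebra, $\mathcal G$ a finite groupoid, $\beta=(\{E_g\},\{\beta_g\})$ a unital action of $\mathcal G$ on $R$: $E_g=E_{r(g)}$ is an ideal of $R$, unital with identity $1_g$ (so $1_{g^{-1}}=1_{d(g)}$), $\beta_g:E_{g^{-1}}\to E_g$ a $K$-algebra isomorphism, $\beta_e=\mathrm{id}_{E_e}$ for $e\in\mathcal G_0$, $\beta_g\beta_h(x)=\beta_{gh}(x)$ whenever $d(g)=r(h)$, $x\in E_{h^{-1}}$; $R=\bigoplus_{e\in\mathcal G_0}E_e$; and $R$ is a $\beta$-Galois extension of $R^\beta$: there exist $x_i,y_i\in R$ ($1\le i\le m$) with $\sum_i x_i\beta_g(y_i1_{g^{-1}})=1_g$ if $g\in\mathcal G_0$ and $=0$ otherwise. For $g\in\mathcal G$, $J_g=\{r\in E_g: r\beta_g(x1_{g^{-1}})=xr\ \forall x\in R\}$. *)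

(* Defs.v *)
From mathcomp Require Import all_boot all_algebra.

Set Implicit Arguments.
Unset Strict Implicit.
Unset Printing Implicit Defensive.

Import GRing.Theory.
Local Open Scope ring_scope.

(* Finite groupoids.  The carrier is a finType G; the partial product is  *)
(* modelled by a total function [gmul] which is only ever used (and only  *)
(* constrained) on composable pairs, i.e. when d g = r h, where           *)
(* r g = g g^{-1} and d g = g^{-1} g, exactly as in the paper.            *)

Section GroupoidDef.
Variable G : finType.
Variables (mul : G -> G -> G) (inv : G -> G).

Definition grng (g : G) : G := mul g (inv g).
Definition gdom (g : G) : G := mul (inv g) g.

Record is_groupoid : Prop := IsGroupoid {
  gdom_mul : forall g h, gdom g = grng h -> gdom (mul g h) = gdom h;
  grng_mul : forall g h, gdom g = grng h -> grng (mul g h) = grng g;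
  gmulA : forall g h k, gdom g = grng h -> gdom h = grng k ->
            mul (mul g h) k = mul g (mul h k);
  ginvK : forall g, inv (inv g) = g;
  gmul_rng : forall g, mul (grng g) g = g;
  gmul_dom : forall g, mul g (gdom g) = g
}.
End GroupoidDef.

Record groupoid (G : finType) := Groupoid {
  gmul : G -> G -> G;
  ginv : G -> G;
  groupoidP : is_groupoid gmul ginv
}.

Section GroupoidOps.
Variables (G : finType) (GG : groupoid G).
Definition r (g : G) := grng (gmul GG) (ginv GG) g.
Definition d (g : G) := gdom (gmul GG) (ginv GG) g.
Definition gid (e : G) : bool := [exists g, r g == e].

Definition subgroupoid (H : {set G}) : Prop :=
  H != set0 /\
  (forall g, g \in H -> ginv GG g \in H) /\
  (forall g h, g \in H -> h \in H -> d g = r h -> gmul GG g h \in H).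
End GroupoidOps.

Section Action.
Variables (K : comPzRingType) (R : algType K) (G : finType) (GG : groupoid G).

Definition is_ideal (I : R -> Prop) : Prop :=
  I 0 /\ (forall x y, I x -> I y -> I (x - y)) /\
  (forall a x, I x -> I (a * x)) /\ (forall a x, I x -> I (x * a)).

Record unital_action := UnitalAction {
  E : G -> R -> Prop;
  one : G -> R;
  beta : G -> R -> R;
  E_r : forall g, E g = E (r GG g);
  E_ideal : forall g, is_ideal (E g);
  one_in : forall g, E g (one g);
  one_unit : forall g x, E g x -> one g * x = x /\ x * one g = x;
  beta_in : forall g x, E (ginv GG g) x -> E g (beta g x);
  beta_add : forall g x y, E (ginv GG g) x -> E (ginv GG g) y ->
               beta g (x + y) = beta g x + beta g y;
  beta_mul : forall g x y, E (ginv GG g) x -> E (ginv GG g) y ->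
               beta g (x * y) = beta g x * beta g y;
  beta_scale : forall g (a : K) x, E (ginv GG g) x ->
               beta g (a *: x) = a *: beta g x;
  beta_one : forall g, beta g (one (ginv GG g)) = one g;
  beta_inj : forall g x y, E (ginv GG g) x -> E (ginv GG g) y ->
               beta g x = beta g y -> x = y;
  beta_surj : forall g y, E g y -> exists2 x, E (ginv GG g) x & beta g x = y;
  beta_id : forall e x, gid GG e -> E e x -> beta e x = x;
  beta_comp : forall g h x, d GG g = r GG h -> E (ginv GG h) x ->
               beta g (beta h x) = beta (gmul GG g h) x;
  R_sum : forall x : R, exists f : G -> R,
            (forall e, gid GG e -> E e (f e)) /\ x = \sum_(e | gid GG e) f e;
  R_direct : forall f : G -> R, (forall e, gid GG e -> E e (f e)) ->
            \sum_(e | gid GG e) f e = 0 -> forall e, gid GG e -> f e = 0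
}.

Definition galois (A : unital_action) : Prop :=
  exists (m : nat) (x y : 'I_m -> R), forall g : G,
    \sum_(i < m) x i * beta A g (y i * one A (ginv GG g)) =
      if gid GG g then one A g else 0.

Definition J (A : unital_action) (g : G) (z : R) : Prop :=
  E A g z /\ forall x : R, z * beta A g (x * one A (ginv GG g)) = x * z.

End Action.

(* Main.v *)
Require Import Defs.
From mathcomp Require Import all_boot all_algebra.
Local Open Scope ring_scope.
Import GRing.Theory.

Section Aux.
Variables (K : comPzRingType) (R : algType K) (G : finType)
    (GG : groupoid G) (A : unital_action R GG).

Let m := gmul GG.
Let iv := ginv GG.
Let P := groupoidP GG.

Lemma rinv g : r GG (iv g) = d GG g.
Proof. by rewrite /r /d /grng /gdom (ginvK P). Qed.
Lemma dinv g : d GG (iv g) = r GG g.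
Proof. by rewrite /r /d /grng /gdom (ginvK P). Qed.
Lemma rr g : r GG (r GG g) = r GG g.
Proof. rewrite {1}/r /grng -/(grng _ _ _) -/(r GG g). 
apply: (grng_mul P). by rewrite -/(d GG g) -/(r GG (ginv GG g)) rinv. Qed.
Lemma dr g : d GG (r GG g) = r GG g.
Proof. rewrite {1}/d /r /grng.
rewrite (gdom_mul P). by rewrite -/(d GG (ginv GG g)) dinv.
by rewrite -/(d GG g) -/(r GG (ginv GG g)) rinv. Qed.

Lemma Emem0 g : E A g 0.
Proof. by move: (E_ideal A g); rewrite /is_ideal; case. Qed.
Lemma EmemD g a b : E A g a -> E A g b -> E A g (a + b).
Proof. move: (E_ideal A g); rewrite /is_ideal; case => I0 [IB _] Ha Hb.
have := IB a (0 - b) Ha (IB _ _ I0 Hb). by rewrite sub0r opprK. Qed.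
Lemma EmemMl g a x : E A g x -> E A g (a * x).
Proof. move=> Hx; move: (E_ideal A g); rewrite /is_ideal; case => _ [_ [H _]]; exact: H. Qed.
Lemma EmemMr g a x : E A g x -> E A g (x * a).
Proof. move=> Hx; move: (E_ideal A g); rewrite /is_ideal; case => _ [_ [_ H]]; exact: H. Qed.
Lemma EmemN g x : E A g x -> E A g (- x).
Proof. move: (E_ideal A g); rewrite /is_ideal; case => I0 [IB _] Hx. by have := IB _ _ I0 Hx; rewrite sub0r. Qed.

Lemma one_eq a b : E A a = E A b -> Defs.one A a = Defs.one A b.
Proof. move=> H.
have h1 : E A a (Defs.one A b) by rewrite H; apply: Defs.one_in.
have h2 : E A b (Defs.one A a) by rewrite -H; apply: Defs.one_in.
have [e1 _] := one_unit h1. have [_ e2] := one_unit h2.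
by rewrite -{1}e2 e1. Qed.

Lemma beta0 g : beta A g 0 = 0.
Proof. have := beta_add (Emem0 (iv g)) (Emem0 (iv g)).
rewrite addr0 => H. by apply: (addrI (beta A g 0)); rewrite addr0 -H. Qed.

Lemma beta_sum g n (F : 'I_n -> R) : (forall i, E A (iv g) (F i)) ->
  beta A g (\sum_(i < n) F i) = \sum_(i < n) beta A g (F i).
Proof. move=> HF.
suff [] : E A (iv g) (\sum_(i < n) F i) /\
   beta A g (\sum_(i < n) F i) = \sum_(i < n) beta A g (F i) by [].
apply: (big_ind2 (fun a b => E A (iv g) a /\ beta A g a = b)).
- by split; [apply: Emem0 | apply: beta0].
- move=> a1 b1 a2 b2 [H1 <-] [H2 <-]; split; first exact: EmemD.
  exact: beta_add.
- by move=> i _; split.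
Qed.

Lemma inter0 g h z : E A g z -> E A h z -> r GG g <> r GG h -> z = 0.
Proof. rewrite (E_r A g) (E_r A h) => Hg Hh ne.
pose f e := if e == r GG g then z else if e == r GG h then - z else 0.
have gidg : gid GG (r GG g) by apply/existsP; exists g.
have gidh : gid GG (r GG h) by apply/existsP; exists h.
have Hf : forall e, gid GG e -> E A e (f e).
  move=> e _; rewrite /f; case: eqP => [->//|_]; case: eqP => [->|_].
  exact: EmemN. exact: Emem0.
have := R_direct Hf.
rewrite (bigD1 (r GG g)) //= (bigD1 (r GG h)) /=; last first.
  by rewrite gidh; apply/eqP => /esym.
rewrite big1; last first.
  move=> e /andP [/andP [_ /negbTE H1] /negbTE H2]; by rewrite /f H1 H2.
rewrite /f eqxx. have -> : (r GG h == r GG g) = false by apply/eqP => /esym. rewrite eqxx addr0 subrr.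
by move=> /(_ erefl _ gidg); rewrite eqxx.
Qed.

Lemma main1 g h : (forall z, J A g z <-> J A h z) ->
     (exists z, J A g z /\ z <> 0) -> galois A -> g = h.
Proof.
move=> Heq [z [Jg nz]] [n [x [y HG]]].
have Jh := (Heq z).1 Jg.
case: Jg => Egz Jgz; case: Jh => Ehz Jhz.
have rgh : r GG g = r GG h.
  by case: (eqVneq (r GG g) (r GG h)) => // /eqP ne; case: nz; apply: inter0 Egz Ehz ne.
pose k := m (iv g) h.
have c1 : gdom m iv (iv g) = grng m iv h by rewrite -/(d GG _) -/(r GG _) dinv.
have rk : r GG k = d GG g.
  rewrite /k /r -/m -/iv (grng_mul P c1). by rewrite -/(r GG (iv g)) rinv.
have dk : d GG k = d GG h by rewrite /k /d -/m -/iv (gdom_mul P c1).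
have gk : m g k = h.
  rewrite /k /m /iv -(gmulA P) //; last by rewrite -/(d GG _) -/(r GG _) rinv.
  have -> : gmul GG g (ginv GG g) = r GG g by []. by rewrite rgh (gmul_rng P).
case Hk: (gid GG k).
  move/existsP: Hk => [m0 /eqP Hm0].
  have kd : k = d GG g by rewrite -rk -Hm0 rr.
  by rewrite -gk kd /m /d (gmul_dom P).
exfalso; apply: nz.
have HS := HG k; rewrite Hk in HS.
pose e := r GG h.
have He := HG e.
have gide : gid GG e by apply/existsP; exists h.
rewrite gide in He.
have Eie : E A (iv e) = E A e by rewrite (E_r A (iv e)) rinv dr.
have oie : Defs.one A (iv e) = Defs.one A e by apply: one_eq.
have He2 : \sum_(i < n) x i * (y i * Defs.one A e) = Defs.one A e.
  rewrite -{2}He; apply: eq_bigr => i _.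
  rewrite beta_id //; first by rewrite oie. rewrite -Eie; apply: EmemMl; exact: Defs.one_in.
have oik : Defs.one A (iv k) = Defs.one A (iv h).
  by apply: one_eq; rewrite (E_r A (iv k)) (E_r A (iv h)) !rinv dk.
have Ek_ig : E A k = E A (iv g).
  by rewrite (E_r A k) (E_r A (iv g)) rk rinv.
have Ewi : forall i, E A (iv k) (y i * Defs.one A (iv k)).
  move=> i; apply: EmemMl; exact: Defs.one_in.
have dgrk : d GG g = r GG k by rewrite rk.
have key : forall i, beta A g (x i * beta A k (y i * Defs.one A (iv k))) =
   beta A g (x i * Defs.one A (iv g)) * beta A h (y i * Defs.one A (iv h)).
  move=> i.
  have Eb : E A (iv g) (beta A k (y i * Defs.one A (iv k))) by rewrite -Ek_ig; apply: beta_in.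
  have [u1 _] := one_unit Eb.
  rewrite -{1}u1 mulrA beta_mul //; last by apply: EmemMl; apply: Defs.one_in.
  by rewrite (beta_comp dgrk (Ewi i)) -/m gk oik.
have : z * beta A g (\sum_(i < n) x i * beta A k (y i * Defs.one A (iv k))) = z.
  rewrite beta_sum; last first.
    move=> i; rewrite -Ek_ig; apply: EmemMl; apply: beta_in; exact: Ewi.
  under eq_bigr => i _ do rewrite key.
  rewrite mulr_sumr.
  under eq_bigr => i _ do rewrite mulrA Jgz -mulrA Jhz.
  have Eez : E A e z by rewrite /e -(E_r A h).
  have [u1 _] := one_unit Eez.
  rewrite -[RHS]u1 -He2 mulr_suml; apply: eq_bigr => i _.
  by rewrite -!mulrA u1.
by rewrite HS beta0 mulr0 => <-.
Qed.
End Aux.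

Theorem lemma3p6 (K : comPzRingType) (R : algType K) (G : finType)
    (GG : groupoid G) (A : unital_action R GG) (HA : galois A) :
  (forall g h : G, (forall z, J A g z <-> J A h z) ->
     (exists z, J A g z /\ z <> 0) -> g = h) /\
  (forall H : {set G}, subgroupoid GG H ->
     forall g h : G, g \in H -> h \in H ->
       (exists z, J A g z /\ z <> 0) -> (exists z, J A h z /\ z <> 0) ->
       (forall z, J A g z <-> J A h z) -> g = h).
Proof.
split.
- move=> g h Heq Hz; exact: main1 Heq Hz HA.
- move=> H _ g h _ _ Hz _ Heq; exact: main1 Heq Hz HA.
Qed.
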